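(* Let $f:\mathbb{R}^n\to\mathbb{R}$ and $a:\mathbb{R}^n\to\mathbb{R}^m$ be twice differentiable on $\mathbb{R}^n$, let $\beta_1\in(0,1)$, $\beta_2\in(0,1)$, and $w\in\mathbb{R}^m$ with $w\ge0$. For any constants $C,\mu>0$ the set $\mathbb{Q}_{\mu,C}$ is compact.
   Context: $e$ denotes the all-ones vector, $S=\mathrm{diag}(s)$. For $\mu>0$: $\psi_\mu(x)=f(x)-\mu\sum_{i=1}^m(\beta_1a_i(x)+\log(\mu w_i-a_i(x)))$ (defined when $a(x)<\mu w$), and $\phi_\mu(x,s,y)=\psi_\mu(x)+\|Sy-\mu e\|_\infty^3/\mu^2$. The set $\mathbb{Q}_{\mu,C}$ consists of all $(x,y,s)\in\mathbb{R}^n\times\mathbb{R}^m_{++}\times\mathbb{R}^m_{++}$ such that $s_iy_i/\mu\in[\beta_2,1/\beta_2]$ for all $i$, $a(x)+s=\mu w$, $\phi_\mu(x,s,y)\le C$, and $\|x\|\le C$ (Euclidean norm). *)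

(* Defs.v *)
From HB Require Import structures.
From mathcomp Require Import all_boot all_order all_algebra.
From mathcomp Require Import all_classical all_reals all_analysis.
Set Implicit Arguments. Unset Strict Implicit. Unset Printing Implicit Defensive.
Import Order.TTheory GRing.Theory Num.Theory.
Import numFieldNormedType.Exports.
Local Open Scope ring_scope.
Local Open Scope classical_set_scope.

(* Twice differentiable on all of R^n: f is (Frechet) differentiable everywhere
   and, for every direction v, x |-> Df(x) v is differentiable everywhere
   (equivalent to differentiability of x |-> Df(x) in the finite-dim. space
   of linear maps, evaluated coordinatewise). *)
Definition twice_differentiable (R : realType) (n : nat) (W : normedModType R)
  (f : 'rV[R]_n -> W) : Prop :=
  (forall x, differentiable f x) /\
  (forall v x, differentiable ('D_v f) x).

Definition enorm (R : realType) (k : nat) (x : 'rV[R]_k) : R :=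
  Num.sqrt (\sum_(i < k) x ord0 i ^+ 2).

Definition inf_dev (R : realType) (m : nat) (mu : R) (s y : 'rV[R]_m) : R :=
  \big[Num.max/0]_(i < m) `|s ord0 i * y ord0 i - mu|.

Definition psi (R : realType) (n m : nat) (f : 'rV[R]_n -> R)
  (a : 'rV[R]_n -> 'rV[R]_m) (beta1 : R) (w : 'rV[R]_m) (mu : R)
  (x : 'rV[R]_n) : R :=
  f x - mu * \sum_(i < m) (beta1 * a x ord0 i + ln (mu * w ord0 i - a x ord0 i)).

Definition phi (R : realType) (n m : nat) (f : 'rV[R]_n -> R)
  (a : 'rV[R]_n -> 'rV[R]_m) (beta1 : R) (w : 'rV[R]_m) (mu : R)
  (x : 'rV[R]_n) (s y : 'rV[R]_m) : R :=
  psi f a beta1 w mu x + inf_dev mu s y ^+ 3 / mu ^+ 2.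

Definition Qset (R : realType) (n m : nat) (f : 'rV[R]_n -> R)
  (a : 'rV[R]_n -> 'rV[R]_m) (beta1 beta2 : R) (w : 'rV[R]_m) (mu C : R)
  : set ('rV[R]_n * 'rV[R]_m * 'rV[R]_m) :=
  [set p | let: (x, y, s) := (p : 'rV[R]_n * 'rV[R]_m * 'rV[R]_m) in
     (forall i, 0 < (y : 'rV[R]_m) ord0 i) /\ (forall i, 0 < (s : 'rV[R]_m) ord0 i) /\
     (forall i, beta2 <= s ord0 i * y ord0 i / mu <= beta2^-1) /\
     (a x + s = mu *: w) /\
     phi f a beta1 w mu x s y <= C /\
     enorm x <= C].

(* Main.v *)
Require Import Defs.
From HB Require Import structures.
From mathcomp Require Import all_boot all_order all_algebra.
From mathcomp Require Import all_classical all_reals all_analysis.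
From mathcomp Require Import ring lra.
Import Order.TTheory GRing.Theory Num.Theory.
Import numFieldNormedType.Exports.
Local Open Scope ring_scope.
Local Open Scope classical_set_scope.

Section Helpers.
Context {R : realType} {T : topologicalType}.
Implicit Types (g h : T -> R).

Lemma cont_cst (c : R) : continuous (fun _ : T => c).
Proof. by move=> p; apply: cvg_cst. Qed.

Lemma cont_D g h : continuous g -> continuous h -> continuous (fun p => g p + h p).
Proof. by move=> cg ch p; apply: cvgD; [exact: cg|exact: ch]. Qed.

Lemma cont_N g : continuous g -> continuous (fun p => - g p).
Proof. by move=> cg p; apply: cvgN; exact: cg. Qed.

Lemma cont_M g h : continuous g -> continuous h -> continuous (fun p => g p * h p).
Proof. by move=> cg ch p; apply: cvgM; [exact: cg|exact: ch]. Qed.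

Lemma cont_max g h : continuous g -> continuous h -> continuous (fun p => Num.max (g p) (h p)).
Proof. by move=> cg ch p; apply: continuous_max; [exact: cg|exact: ch]. Qed.

Lemma cont_X g k : continuous g -> continuous (fun p => g p ^+ k).
Proof.
move=> cg; elim: k => [|k IH].
  by under eq_fun do rewrite expr0; exact: cont_cst.
by under eq_fun do rewrite exprS; exact: cont_M.
Qed.

Lemma cont_big {I : Type} {op : R -> R -> R} {idx : R} {r : seq I} {F : I -> T -> R} :
  (forall g h, continuous g -> continuous h -> continuous (fun p => op (g p) (h p))) ->
  (forall i, continuous (F i)) ->
  continuous (fun p => \big[op/idx]_(i <- r) F i p).
Proof.
move=> hop hF; elim: r => [|j r IH].
  by under eq_fun do rewrite big_nil; exact: cont_cst.
by under eq_fun do rewrite big_cons; exact: hop.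
Qed.

Lemma closed_lef g h : continuous g -> continuous h -> closed [set p | g p <= h p].
Proof.
move=> cg ch.
have -> : [set p | g p <= h p] = (fun p => g p - h p) @^-1` [set t | t <= 0].
  by apply/seteqP; split => p /=; rewrite subr_le0.
apply: preimage_closed; last exact: closed_le.
by move=> p _; apply: cont_D => //; exact: cont_N.
Qed.

Lemma closed_eqf g h : continuous g -> continuous h -> closed [set p | g p = h p].
Proof.
move=> cg ch.
have -> : [set p | g p = h p] = (fun p => g p - h p) @^-1` [set t | t = 0].
  by apply/seteqP; split => p /= => [->|/eqP]; rewrite ?subrr // subr_eq0 => /eqP.
apply: preimage_closed; last exact: closed_eq.
by move=> p _; apply: cont_D => //; exact: cont_N.
Qed.

Lemma closed_forall (I : Type) (P : I -> T -> Prop) :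
  (forall i, closed [set p | P i p]) -> closed [set p | forall i, P i p].
Proof.
move=> hP.
have -> : [set p | forall i, P i p] = \bigcap_(i in setT) [set p | P i p].
  by apply/seteqP; split => p /= H i; [move=> _; exact: H | exact: H].
by apply: closed_bigI => i _; exact: hP.
Qed.

Lemma cont_bound {A : set T} {g} : compact A -> continuous g ->
  exists M, forall x, A x -> `|g x| <= M.
Proof.
move=> cA cg.
have cgA : compact (g @` A).
  apply: continuous_compact => //; exact: continuous_subspaceT.
have [M [_ HM]] := compact_bounded cgA.
exists (M + 1) => x Ax.
by apply: (HM (M + 1)); [rewrite ltrDl | exists x].
Qed.

End Helpers.

Section S.
Context {R : realType} {n m : nat} {a : 'rV[R]_n -> 'rV[R]_m}.
Lemma c11 : continuous (fun p : 'rV[R]_n * 'rV[R]_m * 'rV[R]_m => p.1.1).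
Proof. move=> p. apply: (cvg_comp _ _ (@cvg_fst _ _ _ _ _)). exact: cvg_fst. Qed.
Lemma c12 : continuous (fun p : 'rV[R]_n * 'rV[R]_m * 'rV[R]_m => p.1.2).
Proof. move=> p. apply: (cvg_comp _ _ (@cvg_fst _ _ _ _ _)). exact: cvg_snd. Qed.
Lemma c2 : continuous (fun p : 'rV[R]_n * 'rV[R]_m * 'rV[R]_m => p.2).
Proof. move=> p. exact: cvg_snd. Qed.
Lemma ce k (i : 'I_k) : continuous (fun v : 'rV[R]_k => v ord0 i).
Proof. exact: coord_continuous. Qed.
Lemma ca (ha : forall x, differentiable a x) i : continuous (fun x => a x ord0 i).
Proof. move=> x. apply: (continuous_comp (f := a) (g := fun v : 'rV[R]_m => v ord0 i)).
exact: differentiable_continuous. exact: coord_continuous. Qed.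
Lemma cabs {T : topologicalType} {g : T -> R} : continuous g -> continuous (fun p => `|g p|).
Proof. move=> cg p. apply: (continuous_comp (f := g) (g := Num.norm)). exact: cg. exact: norm_continuous. Qed.
End S.

Lemma ler_abs_sum {R : realType} {k : nat} (F : 'I_k -> R) i : `|F i| <= \sum_j `|F j|.
Proof. by rewrite (bigD1 i) //= lerDl sumr_ge0. Qed.

Lemma inf_dev_ge0 {R : realType} {k : nat} (mu : R) (s y : 'rV[R]_k) : 0 <= inf_dev mu s y.
Proof. by rewrite /inf_dev; apply: (big_ind (fun t : R => 0 <= t)) => // u v hu hv; rewrite le_max hu. Qed.

Lemma enorm_coord {R : realType} {k : nat} (x : 'rV[R]_k) i : `|x ord0 i| <= enorm x.
Proof.
rewrite /enorm -sqrtr_sqr; apply: ler_wsqrtr.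
by rewrite (bigD1 i) //= lerDl sumr_ge0 // => j _; rewrite sqr_ge0.
Qed.

Theorem lemma4 (R : realType) (n m : nat) (f : 'rV[R]_n -> R)
  (a : 'rV[R]_n -> 'rV[R]_m)
  (hf : twice_differentiable f) (ha : twice_differentiable a)
  (beta1 beta2 : R) (hb1 : 0 < beta1 < 1) (hb2 : 0 < beta2 < 1)
  (w : 'rV[R]_m) (hw : forall i, 0 <= w ord0 i)
  (C mu : R) (hC : 0 < C) (hmu : 0 < mu) :
  compact (Qset f a beta1 beta2 w mu C).
Proof.
have cf : continuous f := fun x => differentiable_continuous (hf.1 x).
have cai := ca ha.1.
pose pX := [set x : 'rV[R]_n | forall i, `[-C, C] (x ord0 i)].
have cX : compact pX.
  have h := (@rV_compact R n (fun _ => `[-C, C]%classic)).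
  by apply: h => i; exact: segment_compact.
have [Mf hMf] := cont_bound cX cf.
have [Ma hMa] := cont_bound cX (g := fun x => \sum_(i < m) `|a x ord0 i|)
  (cont_big (@cont_D _ _) (fun i => cabs (cai i))).
pose Wm := \sum_(i < m) `|w ord0 i|.
pose S := mu * Wm + Ma + 1.
pose L := (- Mf - C) / mu - Ma - m%:R * (Ma + S).
pose d := expR L.
have d0 : 0 < d by exact: expR_gt0.
have Hx : forall x, enorm x <= C -> pX x.
  move=> x hx i; rewrite /= in_itv /=.
  by have := le_trans (enorm_coord x i) hx; rewrite ler_norml.
have Hs : forall x (s y : 'rV[R]_m), pX x -> (forall i, 0 < s ord0 i) ->
    (forall i, a x ord0 i + s ord0 i = mu * w ord0 i) ->
    phi f a beta1 w mu x s y <= C -> forall i, d <= s ord0 i <= S.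
  move=> x s y xX spos seq hphi.
  have sj j : mu * w ord0 j - a x ord0 j = s ord0 j by rewrite -(seq j); lra.
  have hM := hMa x xX.
  rewrite ger0_norm ?sumr_ge0 // in hM.
  have haj j : `|a x ord0 j| <= Ma := le_trans (ler_abs_sum _ j) hM.
  have Ma0 : 0 <= Ma := le_trans (sumr_ge0 _ (fun j _ => normr_ge0 (a x ord0 j))) hM.
  have Wm0 : 0 <= Wm := sumr_ge0 _ (fun j _ => normr_ge0 (w ord0 j)).
  have muW : 0 <= mu * Wm := mulr_ge0 (ltW hmu) Wm0.
  have S0 : 0 < S by rewrite /S; lra.
  have hSj j : s ord0 j <= S.
    have h1 : mu * w ord0 j <= mu * Wm.
      apply: ler_wpM2l; first exact: ltW.
      exact: le_trans (ler_norm _) (ler_abs_sum _ j).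
    have := haj j; rewrite ler_norml => /andP[h2 h3].
    rewrite -sj /S; lra.
  have hf0 := hMf x xX; rewrite ler_norml in hf0; case/andP: hf0 => hf1 _.
  have hdev : 0 <= inf_dev mu s y ^+ 3 / mu ^+ 2.
    by apply: divr_ge0; apply: exprn_ge0; [exact: inf_dev_ge0|exact: ltW].
  move: hphi; rewrite /phi /psi => hphi.
  have hsum : (- Mf - C) / mu <=
      \sum_(j < m) (beta1 * a x ord0 j + ln (mu * w ord0 j - a x ord0 j)).
    rewrite ler_pdivrMr //; lra.
  have tj j : beta1 * a x ord0 j + ln (mu * w ord0 j - a x ord0 j) <= Ma + S.
    rewrite sj.
    have e1 := expR_ge1Dx (ln (s ord0 j)).
    rewrite lnK in e1; last by rewrite posrE.
    have := haj j; rewrite ler_norml => /andP[h2 h3].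
    have := hSj j; case/andP: hb1 => b0 b1 hs.
    have : beta1 * a x ord0 j <= Ma.
      case: (lerP 0 (a x ord0 j)) => ha0; nra.
    lra.
  move=> i.
  rewrite (bigD1 i) //= in hsum.
  have hrest : \sum_(j < m | j != i)
      (beta1 * a x ord0 j + ln (mu * w ord0 j - a x ord0 j)) <= m%:R * (Ma + S).
    apply: (le_trans (ler_sum _ (fun j _ => tj j))).
    have hc : \sum_(j < m) (Ma + S) = m%:R * (Ma + S).
      by rewrite sumr_const cardT size_enum_ord mulr_natl.
    rewrite (bigD1 i) //= in hc.
    lra.
  have hai := haj i; rewrite ler_norml in hai; case/andP: hai => hai1 hai2.
  case/andP: hb1 => b0 b1.
  have hbi : beta1 * a x ord0 i <= Ma.
    case: (lerP 0 (a x ord0 i)) => ha0; nra.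
  have hL : L <= ln (s ord0 i).
    rewrite -sj /L; lra.
  apply/andP; split; last exact: hSj.
  by rewrite /d -(lnK (spos i)) ler_expR.
pose lo := beta2 * mu / S; pose hi := mu / (beta2 * d).
have S0 : 0 < S.
  have Wm0 : 0 <= Wm := sumr_ge0 _ (fun j _ => normr_ge0 (w ord0 j)).
  have Ma0 : 0 <= Ma.
    have h0 : pX 0 by move=> i; rewrite /= mxE in_itv /=; apply/andP; split; lra.
    exact: le_trans (normr_ge0 _) (hMa 0 h0).
  have := mulr_ge0 (ltW hmu) Wm0; rewrite /S; lra.
case/andP: hb2 => b20 b21.
have lo0 : 0 < lo by rewrite /lo; apply: divr_gt0 => //; exact: mulr_gt0.
pose pY := [set y : 'rV[R]_m | forall i, `[lo, hi] (y ord0 i)].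
pose pS := [set s : 'rV[R]_m | forall i, `[d, S] (s ord0 i)].
have cY : compact pY.
  have h := (@rV_compact R m (fun _ => `[lo, hi]%classic)).
  by apply: h => i; exact: segment_compact.
have cS : compact pS.
  have h := (@rV_compact R m (fun _ => `[d, S]%classic)).
  by apply: h => i; exact: segment_compact.
pose g := fun p : 'rV[R]_n * 'rV[R]_m * 'rV[R]_m =>
  f p.1.1 - mu * \sum_(i < m) (beta1 * a p.1.1 ord0 i + ln (Num.max (p.2 ord0 i) d))
  + inf_dev mu p.2 p.1.2 ^+ 3 / mu ^+ 2.
have phig : forall x y (s : 'rV[R]_m), (forall i, d <= s ord0 i) ->
    (forall i, a x ord0 i + s ord0 i = mu * w ord0 i) ->
    phi f a beta1 w mu x s y = g (x, y, s).
  move=> x y s sd seq; rewrite /phi /psi /g /=; congr (_ - _ * _ + _).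
  apply: eq_bigr => i _; rewrite max_l ?sd //.
  by have -> : mu * w ord0 i - a x ord0 i = s ord0 i by rewrite -(seq i); lra.
pose K := [set p : 'rV[R]_n * 'rV[R]_m * 'rV[R]_m | enorm p.1.1 <= C]
  `&` [set p : 'rV[R]_n * 'rV[R]_m * 'rV[R]_m | forall i, a p.1.1 ord0 i + p.2 ord0 i = mu * w ord0 i]
  `&` [set p : 'rV[R]_n * 'rV[R]_m * 'rV[R]_m | forall i, beta2 <= p.2 ord0 i * p.1.2 ord0 i / mu]
  `&` [set p : 'rV[R]_n * 'rV[R]_m * 'rV[R]_m | forall i, p.2 ord0 i * p.1.2 ord0 i / mu <= beta2^-1]
  `&` [set p : 'rV[R]_n * 'rV[R]_m * 'rV[R]_m | g p <= C].
have -> : Qset f a beta1 beta2 w mu C = (pX `*` pY `*` pS) `&` K.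
  apply/seteqP; split => -[[x y] s] /=.
    case=> ypos [spos [hb [heq [hphi hn]]]].
    have seq i : a x ord0 i + s ord0 i = mu * w ord0 i.
      by have := congr1 (fun M : 'rV[R]_m => M ord0 i) heq; rewrite !mxE.
    have xX := Hx x hn.
    have hs := Hs x s y xX spos seq hphi.
    have sd i : d <= s ord0 i by case/andP: (hs i).
    split; first split; first split.
    - exact: xX.
    - move=> i; rewrite /= in_itv /=.
      case/andP: (hb i) => h1 h2; case/andP: (hs i) => h3 h4.
      rewrite ler_pdivlMr // in h1.
      rewrite ler_pdivrMr // (mulrC (beta2^-1)) ler_pdivlMr // in h2.
      have yp := ypos i.
      apply/andP; split.
        rewrite /lo ler_pdivrMr //; nra.
      rewrite /hi ler_pdivlMr; last exact: mulr_gt0.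
      nra.
    - move=> i; exact: hs.
    - split; first split; first split; first split.
      + exact: hn.
      + exact: seq.
      + by move=> i; case/andP: (hb i).
      + by move=> i; case/andP: (hb i).
      + by rewrite /= -phig.
  case=> [[[xX yY] sS] [[[[hn seq] hb1'] hb2'] hg]].
  have sd i : d <= s ord0 i.
    by have := sS i; rewrite /= in_itv /= => /andP[].
  have yl i : lo <= y ord0 i.
    by have := yY i; rewrite /= in_itv /= => /andP[].
  split; first by move=> i; exact: lt_le_trans lo0 (yl i).
  split; first by move=> i; exact: lt_le_trans d0 (sd i).
  split; first by move=> i; rewrite hb1' hb2'.
  split; first by apply/rowP => i; rewrite !mxE seq.
  split; last exact: hn.
  by rewrite phig.
apply: compact_closedI; first by apply: compact_setX => //; exact: compact_setX.
have c11 := @c11 R n m; have c12 := @c12 R n m; have c2 := @c2 R n m.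
have cx i : continuous (fun p : 'rV[R]_n * 'rV[R]_m * 'rV[R]_m => p.1.1 ord0 i).
  move=> p; apply: (continuous_comp (f := fun p : 'rV[R]_n * 'rV[R]_m * 'rV[R]_m => p.1.1)
    (g := fun v : 'rV[R]_n => v ord0 i)); [exact: c11 | exact: coord_continuous].
have cy i : continuous (fun p : 'rV[R]_n * 'rV[R]_m * 'rV[R]_m => p.1.2 ord0 i).
  move=> p; apply: (continuous_comp (f := fun p : 'rV[R]_n * 'rV[R]_m * 'rV[R]_m => p.1.2)
    (g := fun v : 'rV[R]_m => v ord0 i)); [exact: c12 | exact: coord_continuous].
have cs i : continuous (fun p : 'rV[R]_n * 'rV[R]_m * 'rV[R]_m => p.2 ord0 i).
  move=> p; apply: (continuous_comp (f := fun p : 'rV[R]_n * 'rV[R]_m * 'rV[R]_m => p.2)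
    (g := fun v : 'rV[R]_m => v ord0 i)); [exact: c2 | exact: coord_continuous].
have cax i : continuous (fun p : 'rV[R]_n * 'rV[R]_m * 'rV[R]_m => a p.1.1 ord0 i).
  move=> p; apply: (continuous_comp (f := fun p : 'rV[R]_n * 'rV[R]_m * 'rV[R]_m => p.1.1)
    (g := fun x : 'rV[R]_n => a x ord0 i)); [exact: c11 | exact: cai].
have cfx : continuous (fun p : 'rV[R]_n * 'rV[R]_m * 'rV[R]_m => f p.1.1).
  move=> p; apply: (continuous_comp (f := fun p : 'rV[R]_n * 'rV[R]_m * 'rV[R]_m => p.1.1)
    (g := f)); [exact: c11 | exact: cf].
have csy i : continuous (fun p : 'rV[R]_n * 'rV[R]_m * 'rV[R]_m =>
    p.2 ord0 i * p.1.2 ord0 i / mu).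
  by apply: cont_M; [apply: cont_M|exact: cont_cst].
apply: closedI; first apply: closedI; first apply: closedI; first apply: closedI.
- apply: closed_lef; last exact: cont_cst.
  move=> p; apply: (continuous_comp
    (f := fun p : 'rV[R]_n * 'rV[R]_m * 'rV[R]_m => \sum_(i < n) p.1.1 ord0 i ^+ 2)
    (g := Num.sqrt)); last exact: sqrt_continuous.
  by apply: cont_big => [|i]; [exact: cont_D | exact: cont_X].
- apply: closed_forall => i; apply: closed_eqf; last exact: cont_cst.
  exact: cont_D.
- by apply: closed_forall => i; apply: closed_lef; [exact: cont_cst|].
- by apply: closed_forall => i; apply: closed_lef; [|exact: cont_cst].
- apply: closed_lef; last exact: cont_cst.
  rewrite /g; apply: cont_D; first apply: cont_D => //.
    apply: cont_N; apply: cont_M; first exact: cont_cst.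
    apply: cont_big => [|i]; first exact: cont_D.
    apply: cont_D; first by apply: cont_M; [exact: cont_cst|].
    have h1 : continuous (fun p : 'rV[R]_n * 'rV[R]_m * 'rV[R]_m => Num.max (p.2 ord0 i) d).
      by apply: cont_max; [|exact: cont_cst].
    move=> p.
    have h2 : 0 < Num.max (p.2 ord0 i) d by rewrite (lt_le_trans d0) // le_max lexx orbT.
    exact: (continuous_comp (h1 p) (continuous_ln h2)).
  apply: cont_M; last exact: cont_cst.
  apply: cont_X; rewrite /inf_dev.
  apply: cont_big => [|i]; first exact: cont_max.
  by apply: cabs; apply: cont_D; [apply: cont_M|exact: cont_cst].
Qed.
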